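(* Let $\mathcal{S}(\lambda)$ be an $(n+r)\times (n+r)$ system polynomial (regular or singular) of degree $m$. Then every Fiedler pencil $\mathbb{L}_{\sigma}(\lambda)$ of $\mathcal{S}(\lambda)$ is a Rosenbrock linearization of $\mathcal{S}(\lambda)$, i.e., there exist $nm\times nm$ unimodular matrix polynomials $U(\lambda), V(\lambda)$ such that $$\left[\begin{array}{c|c} U(\lambda) & 0\\ \hline 0 & I_r\end{array}\right]\mathbb{L}_\sigma(\lambda)\left[\begin{array}{c|c} V(\lambda) & 0\\ \hline 0 & I_r\end{array}\right] = \left[\begin{array}{c|c} I_{(m-1)n} & 0\\ \hline 0 & \mathcal{S}(\lambda)\end{array}\right].$$
   Context: A system polynomial of degree $m$ is $\mathcal{S}(\lambda) = \left[\begin{array}{c|c} P(\lambda) & C\\ \hline B & A-\lambda E\end{array}\right]$ with $P(\lambda)=\sum_{j=0}^m\lambda^j A_j$ an $n\times n$ matrix polynomial of degree $m$ ($A_m\ne0$), $C\in\mathbb{C}^{n\times r}$, $B\in\mathbb{C}^{r\times n}$ constant, and $A-\lambda E$ an $r\times r$ pencil. Its Fiedler matrices are $\mathbb{M}_0 = \left[\begin{array}{c|c} M_0 & -e_m\otimes C\\ \hline -e_m^T\otimes B & -A\end{array}\right]$, $\mathbb{M}_m=\mathrm{diag}(M_m,-E)$, $\mathbb{M}_i=\mathrm{diag}(M_i,I_r)$ ($1\le i\le m-1$), where $e_m$ is the $m$-th column of $I_m$, $M_0=\mathrm{diag}(I_{(m-1)n},-A_0)$, $M_m=\mathrm{diag}(A_m,I_{(m-1)n})$,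 $M_i=\mathrm{diag}\left(I_{(m-i-1)n},\left[\begin{smallmatrix}-A_i & I_n\\ I_n&0\end{smallmatrix}\right],I_{(i-1)n}\right)$. For a bijection $\sigma:\{0,\ldots,m-1\}\to\{1,\ldots,m\}$ the Fiedler pencil is $\mathbb{L}_\sigma(\lambda)=\lambda\mathbb{M}_m-\mathbb{M}_{\sigma^{-1}(1)}\cdots\mathbb{M}_{\sigma^{-1}(m)}$. A matrix polynomial is unimodular if its determinant is a nonzero constant. An $(nm+r)\times(nm+r)$ system pencil $\mathbb{L}(\lambda)$ is a Rosenbrock linearization of an $(n+r)\times(n+r)$ system polynomial $\mathcal{X}(\lambda)$ of degree $m>1$ if there are $nm\times nm$ unimodular $U(\lambda),V(\lambda)$ with $\mathrm{diag}(U(\lambda),I_r)\,\mathbb{L}(\lambda)\,\mathrm{diag}(V(\lambda),I_r)=\mathrm{diag}(I_{(m-1)n},\mathcal{X}(\lambda))$. *)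

(* Defs.v *)
From HB Require Import structures.
From mathcomp Require Import all_boot all_order all_algebra all_fingroup.
Set Implicit Arguments. Unset Strict Implicit. Unset Printing Implicit Defensive.
Import GRing.Theory.
Local Open Scope ring_scope.

Lemma off_lt (m n : nat) (p : 'I_(m * n)) : (modn p n < n)%N.
Proof.
case: n p => [|n] p; last by rewrite ltn_mod.
by case: p => i; rewrite muln0.
Qed.

Definition off (m n : nat) (p : 'I_(m * n)) : 'I_n := Ordinal (off_lt p).

Definition blockmx (F : fieldType) (m n : nat) (f : nat -> nat -> 'M[F]_n)
  : 'M[F]_(m * n) :=
  \matrix_(p, q) f (divn p n) (divn q n) (off p) (off q).

Definition M0blk (F : fieldType) (m n : nat) (A0 : 'M[F]_n) (b c : nat) : 'M[F]_n :=
  if b == c then (if b == m.-1 then - A0 else 1%:M) else 0.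

Definition Mmblk (F : fieldType) (n : nat) (Am : 'M[F]_n) (b c : nat) : 'M[F]_n :=
  if b == c then (if b == 0%N then Am else 1%:M) else 0.

(* blocks of M_i = diag(I_{(m-i-1)n}, [[-A_i, I],[I, 0]], I_{(i-1)n}), 1 <= i <= m-1 *)
Definition Miblk (F : fieldType) (m n i : nat) (Ai : 'M[F]_n) (b c : nat) : 'M[F]_n :=
  let k := (m - i - 1)%N in
  if (b == k) && (c == k) then - Ai
  else if (b == k) && (c == k.+1) then 1%:M
  else if (b == k.+1) && (c == k) then 1%:M
  else if (b == k.+1) && (c == k.+1) then 0
  else if b == c then 1%:M else 0.

(* e_m (x) C  (nm x r)  and  e_m^T (x) B  (r x nm) *)
Definition emC (F : fieldType) (m n r : nat) (C : 'M[F]_(n, r)) : 'M[F]_(m * n, r) :=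
  \matrix_(p, q) if divn p n == m.-1 then C (off p) q else 0.
Definition emB (F : fieldType) (m n r : nat) (B : 'M[F]_(r, n)) : 'M[F]_(r, m * n) :=
  \matrix_(p, q) if divn q n == m.-1 then B p (off q) else 0.

Definition fiedler_mx (F : fieldType) (m n r : nat) (A : nat -> 'M[F]_n)
  (C : 'M[F]_(n, r)) (B : 'M[F]_(r, n)) (Ap Ep : 'M[F]_r) (i : nat)
  : 'M[F]_(m * n + r) :=
  if i == 0%N then
    block_mx (blockmx m (M0blk m (A 0%N))) (- emC m C) (- emB m B) (- Ap)
  else if i == m then
    block_mx (blockmx m (Mmblk (A m))) 0 0 (- Ep)
  else
    block_mx (blockmx m (Miblk m i (A i))) 0 0 1%:M.

(* Fiedler pencil L_sigma(X) = X M_m - M_{sigma^-1(1)} ... M_{sigma^-1(m)}.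
   The bijection sigma : {0..m-1} -> {1..m} is encoded by s : 'S_m with
   sigma(j) = s j + 1, so sigma^-1(k+1) = s^-1 k. *)
Definition fiedler_pencil (F : fieldType) (m n r : nat) (A : nat -> 'M[F]_n)
  (C : 'M[F]_(n, r)) (B : 'M[F]_(r, n)) (Ap Ep : 'M[F]_r) (s : 'S_m)
  : 'M[{poly F}]_(m * n + r) :=
  'X *: map_mx polyC (fiedler_mx m A C B Ap Ep m)
  - map_mx polyC (\big[mulmx/1%:M]_(k < m) fiedler_mx m A C B Ap Ep ((s^-1)%g k)).

Definition syspoly (F : fieldType) (m n r : nat) (A : nat -> 'M[F]_n)
  (C : 'M[F]_(n, r)) (B : 'M[F]_(r, n)) (Ap Ep : 'M[F]_r) : 'M[{poly F}]_(n + r) :=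
  block_mx (\sum_(j < m.+1) 'X^j *: map_mx polyC (A j)) (map_mx polyC C)
           (map_mx polyC B) (map_mx polyC Ap - 'X *: map_mx polyC Ep).

Definition unimodular (F : fieldType) (k : nat) (U : 'M[{poly F}]_k) : Prop :=
  exists c : F, c != 0 /\ \det U = c%:P.

Lemma rl_cast (n r m : nat) : (0 < m)%N -> (m.-1 * n + (n + r) = m * n + r)%N.
Proof. by case: m => // m _; rewrite /= mulSn addnA [(m * n + n)%N]addnC. Qed.

Definition rosenbrock_lin (F : fieldType) (n r m : nat)
  (e : (m.-1 * n + (n + r) = m * n + r)%N)
  (L : 'M[{poly F}]_(m * n + r)) (X : 'M[{poly F}]_(n + r)) : Prop :=
  exists U V : 'M[{poly F}]_(m * n),
    [/\ unimodular U, unimodular V &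
      block_mx U 0 0 1%:M *m L *m block_mx V 0 0 1%:M
      = castmx (e, e) (block_mx (1%:M : 'M_(m.-1 * n)) 0 0 X)].

(* Main.v *)
Require Import Defs.
From HB Require Import structures.
From mathcomp Require Import all_boot all_order all_algebra all_fingroup.
From mathcomp Require Import zify.
Set Implicit Arguments. Unset Strict Implicit. Unset Printing Implicit Defensive.
Import GRing.Theory.
Local Open Scope ring_scope.


Section Blk.
Variables (F : fieldType) (m n : nat).
Local Notation R := {poly F}.
Local Notation MN := 'M[R]_n.

Lemma divn_ltm (p : 'I_(m * n)) : (p %/ n < m)%N.
Proof.
case: n p => [|n'] p; first by case: p => i; rewrite muln0.
by rewrite ltn_divLR.
Qed.

Definition pblk (f : nat -> nat -> MN) : 'M[R]_(m * n) :=
  \matrix_(p, q) f (p %/ n)%N (q %/ n)%N (off p) (off q).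

Lemma pblk_ext f g : (forall b c, (b < m)%N -> (c < m)%N -> f b c = g b c) ->
  pblk f = pblk g.
Proof. by move=> h; apply/matrixP=> i j; rewrite !mxE h // divn_ltm. Qed.

Lemma pblkD f g : pblk f + pblk g = pblk (fun b c => f b c + g b c).
Proof. by apply/matrixP=> i j; rewrite !mxE. Qed.
Lemma pblkN f : - pblk f = pblk (fun b c => - f b c).
Proof. by apply/matrixP=> i j; rewrite !mxE. Qed.
Lemma pblkZ (x : R) f : x *: pblk f = pblk (fun b c => x *: f b c).
Proof. by apply/matrixP=> i j; rewrite !mxE. Qed.
Lemma pblk0 : pblk (fun _ _ => 0) = 0.
Proof. by apply/matrixP=> i j; rewrite !mxE. Qed.

Lemma ordpair_lt (d : 'I_m) (o : 'I_n) : (d * n + o < m * n)%N.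
Proof.
case: d o => d hd [o ho] /=.
apply: (@leq_trans (d * n + n)); first by rewrite ltn_add2l.
by rewrite addnC -mulSn leq_mul2r hd orbT.
Qed.

Definition ordpair (x : 'I_m * 'I_n) : 'I_(m * n) := Ordinal (ordpair_lt x.1 x.2).
Definition unpair (p : 'I_(m * n)) : 'I_m * 'I_n := (Ordinal (divn_ltm p), off p).

Lemma ordpair_div (x : 'I_m * 'I_n) : (ordpair x %/ n)%N = x.1.
Proof. case: x => d [o ho] /=; by rewrite divnMDl ?(divn_small ho) ?addn0 // (leq_ltn_trans _ ho). Qed.

Lemma ordpair_off (x : 'I_m * 'I_n) : off (ordpair x) = x.2.
Proof. apply: val_inj; case: x => d [o ho] /=; by rewrite modnMDl modn_small. Qed.

Lemma sum_pair (V : nmodType) (G : 'I_(m * n) -> V) :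
  \sum_(p : 'I_(m * n)) G p = \sum_(d < m) \sum_(o < n) G (ordpair (d, o)).
Proof.
rewrite pair_bigA /=.
rewrite (reindex ordpair) //=.
exists unpair => [[d o] _|p _].
  rewrite /unpair ordpair_off; congr pair; apply: val_inj; exact: (ordpair_div (d, o)).
apply: val_inj; rewrite /= -divn_eq //.
Qed.

Lemma pblk_mul f g : pblk f *m pblk g =
  pblk (fun b c => \sum_(d < m) f b d *m g d c).
Proof.
apply/matrixP=> i j; rewrite !mxE sum_pair summxE; apply: eq_bigr => d _.
rewrite mxE; apply: eq_bigr => o _; by rewrite !mxE ordpair_div ordpair_off.
Qed.


Lemma sum_if (V : nmodType) (b : nat) (X : V) : (b < m)%N ->
  \sum_(d < m) (if (d : nat) == b then X else 0) = X.
Proof.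
move=> hb; rewrite (bigD1 (Ordinal hb)) //= eqxx big1 ?addr0 // => d hd.
by have -> : ((d : nat) == b) = false by apply/negbTE; move: hd; rewrite -val_eqE.
Qed.

Definition dg (g : nat -> MN) := pblk (fun b c => if b == c then g b else 0).
Definition bd (x : MN) (b0 c0 : nat) :=
  pblk (fun b c => if (b == b0) && (c == c0) then x else 0).

Lemma dg_mul g h : dg g *m dg h = dg (fun b => g b *m h b).
Proof.
rewrite pblk_mul; apply: pblk_ext => x y hx hy.
rewrite (eq_bigr (fun d : 'I_m => if (d : nat) == x then g x *m (if x == y then h x else 0) else 0)).
  by rewrite sum_if //; case: eqP; rewrite ?mulmx0.
move=> d _; rewrite [x == d]eq_sym; case: eqP => [->|]; last by rewrite mul0mx.
by case: eqP => [->|]; rewrite ?mulmx0.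
Qed.

Lemma dg_bd g x b0 c0 : dg g *m bd x b0 c0 = bd (g b0 *m x) b0 c0.
Proof.
rewrite pblk_mul; apply: pblk_ext => b c hb hc.
rewrite (eq_bigr (fun d : 'I_m => if (d : nat) == b then g b *m (if (b == b0) && (c == c0) then x else 0) else 0)).
  rewrite sum_if //; case: (eqVneq b b0) => [->|hne] /=; last by rewrite mulmx0.
  by case: (c == c0); rewrite ?mulmx0.
move=> d _; rewrite [b == d]eq_sym; case: eqP => [->|]; last by rewrite mul0mx.
by [].
Qed.

Lemma bd_dg g x b0 c0 : bd x b0 c0 *m dg g = bd (x *m g c0) b0 c0.
Proof.
rewrite pblk_mul; apply: pblk_ext => b c hb hc.
rewrite (eq_bigr (fun d : 'I_m => if (d : nat) == c then (if (b == b0) && (c == c0) then x else 0) *m g c else 0)).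
  rewrite sum_if //; case: (b == b0); rewrite ?mul0mx //=.
  by case: eqP => [->|]; rewrite ?mul0mx.
move=> d _; case: (eqVneq (d : nat) c) => [->|hne] /=; first by [].
by rewrite ?(negbTE hne) mulmx0.
Qed.

Lemma bd_mul x y b0 c0 c1 d0 : (c0 < m)%N ->
  bd x b0 c0 *m bd y c1 d0 = if c0 == c1 then bd (x *m y) b0 d0 else 0.
Proof.
move=> hc0; rewrite pblk_mul.
have -> : (if c0 == c1 then bd (x *m y) b0 d0 else 0) =
  pblk (fun b c => if (b == b0) && (c == d0) && (c0 == c1) then x *m y else 0).
  by case: (c0 == c1); rewrite -?pblk0; apply: pblk_ext => b c _ _; rewrite ?andbT ?andbF.
apply: pblk_ext => b c hb hc.
rewrite (eq_bigr (fun d : 'I_m => if (d : nat) == c0 then (if (b == b0) then x else 0) *m (if (c0 == c1) && (c == d0) then y else 0) else 0)).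
  rewrite sum_if //; case: (b == b0); rewrite ?mul0mx //=; case: (c0 == c1); rewrite ?mulmx0 ?andbF //=.
  by case: (c == d0); rewrite ?mulmx0.
move=> d _; case: (eqVneq (d : nat) c0) => [->|hne] /=; first by rewrite andbT.
by rewrite andbF mul0mx.
Qed.

Lemma pblk1 : pblk (fun b c => if b == c then 1%:M else 0) = 1%:M.
Proof.
apply/matrixP=> i j; rewrite !mxE.
have -> : (i == j) = ((i %/ n)%N == (j %/ n)%N) && (off i == off j).
  apply/eqP/andP => [->|[/eqP h1 /eqP h2]]; first by [].
  apply: val_inj; rewrite /= (divn_eq i n) (divn_eq j n) h1.
  by move: h2 => /(congr1 val) /= ->.
by case: eqP => _ //=; rewrite mxE.
Qed.

Lemma dg1 : dg (fun _ => 1%:M) = 1%:M.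
Proof. exact: pblk1. Qed.

Lemma pblk_disj f g (S S' : pred nat) :
  (forall b c, ~~ (S b && S c) -> f b c = 0) ->
  (forall b c, ~~ (S' b && S' c) -> g b c = 0) ->
  (forall d, S d -> ~~ S' d) -> pblk f *m pblk g = 0.
Proof.
move=> hf hg hd; rewrite pblk_mul -pblk0; apply: pblk_ext => b c _ _.
apply: big1 => d _; case hS: (S d).
  by rewrite hg ?mulmx0 // (negbTE (hd _ hS)).
by rewrite hf ?mul0mx // hS andbF.
Qed.


Lemma bd0 b c : bd 0 b c = 0.
Proof. by rewrite -pblk0; apply: pblk_ext => x y _ _; case: ifP. Qed.

End Blk.

Lemma mulmxZr (R : comPzRingType) p q s (a : R) (A : 'M[R]_(p, q)) (B : 'M[R]_(q, s)) :
  A *m (a *: B) = a *: (A *m B).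
Proof. by rewrite scalemxAr. Qed.
Lemma mulmxZl (R : comPzRingType) p q s (a : R) (A : 'M[R]_(p, q)) (B : 'M[R]_(q, s)) :
  (a *: A) *m B = a *: (A *m B).
Proof. by rewrite scalemxAl. Qed.


Lemma eqnSF k : (k == k.+1) = false. Proof. by elim: k. Qed.
Lemma eqSnF k : (k.+1 == k) = false. Proof. by elim: k. Qed.

Lemma ltSnF k : (k.+1 < k)%N = false. Proof. by rewrite ltnNge leqnSn. Qed.

Ltac bsimp := repeat match goal with
  | H : is_true (?a != ?b) |- context [?a == ?b] => rewrite (negbTE H)
  | H : is_true (?a != ?b) |- context [?b == ?a] => rewrite (eq_sym b a) (negbTE H)
  | H : is_true (?x != ?k) |- context [(?x < ?k.+1)%N] => rewrite (ltnS x k) (leq_eqVlt x k) (negbTE H) /=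
  end.

Ltac casek x k := have [?|?] := eqVneq x k; [subst x|have [?|?] := eqVneq x k.+1; [subst x|]].

Ltac msimp := rewrite ?(eqxx, eqnSF, eqSnF, ltnn, ltnSn, ltSnF, andbT, andbF, andTb, andFb) /=;
  bsimp; rewrite ?(eqxx, eqnSF, eqSnF, ltnn, ltnSn, ltSnF, andbT, andbF, andTb, andFb) /=;
  rewrite ?(mul1mx, mulmx1, mul0mx, mulmx0, scaler0, addr0, add0r, scale0r).

Section Core.
Variables (F : fieldType) (m n : nat).
Local Notation R := {poly F}.
Local Notation MN := 'M[R]_n.
Local Notation dg := (@dg F m n).
Local Notation bd := (@bd F m n).

Definition Nd (k : nat) (T : MN) (d : nat) : MN :=
  if (d < k)%N then 0 else if d == k then T else 1%:M.

Variables (k : nat) (hk : (k.+1 < m)%N) (T Aj : MN).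

Definition Mjinv := dg (fun d => if d == k then 0 else if d == k.+1 then Aj else 1%:M)
   + bd 1%:M k k.+1 + bd 1%:M k.+1 k.
Definition Mj := dg (fun d => if d == k then - Aj else if d == k.+1 then 0 else 1%:M)
   + bd 1%:M k k.+1 + bd 1%:M k.+1 k.

Lemma hk0 : (k < m)%N. Proof. exact: ltnW. Qed.

Lemma core1 :
  (1%:M + bd ('X *: T) k.+1 k) *m Mjinv *m ('X *: dg (Nd k T)) *m (1%:M + bd ('X *: 1%:M) k k.+1)
  = 'X *: dg (Nd k.+1 ('X *: T + Aj)) + bd ('X *: T) k.+1 k + bd ('X *: 1%:M) k k.+1
    + bd ('X *: T) k.+1 k *m bd ('X *: 1%:M) k k.+1.
Proof.
have hk' := hk0.
rewrite /Mjinv -dg1 !(mulmxDl, mulmxDr).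
rewrite !(mulmxZr, mulmxZl, dg_mul, dg_bd, bd_dg, bd_mul, mulmx1, mul1mx, mulmx0, mul0mx, scaler0, addr0, add0r, bd0) //.
rewrite ?eqxx ?eqnSF ?eqSnF /= ?(mulmxZr, mulmxZl, dg_mul, dg_bd, bd_dg, bd_mul, mulmx1, mul1mx, mulmx0, mul0mx, scaler0, addr0, add0r, bd0) //.
rewrite eqSnF scaler0 addr0 /dg /bd !pblkZ !pblkD; apply: pblk_ext => x y hx hy.
rewrite /Nd; casek x k; casek y k; msimp.
all: try done.
by rewrite scalerDr (addrC ('X *: ('X *: T))).
Qed.

Lemma core2 :
  (1%:M + bd ('X *: 1%:M) k.+1 k) *m ('X *: dg (Nd k T)) *m Mjinv *m (1%:M + bd ('X *: T) k k.+1)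
  = 'X *: dg (Nd k.+1 ('X *: T + Aj)) + bd ('X *: 1%:M) k.+1 k + bd ('X *: T) k k.+1
    + bd ('X *: 1%:M) k.+1 k *m bd ('X *: T) k k.+1.
Proof.
have hk' := hk0.
rewrite /Mjinv -dg1 !(mulmxDl, mulmxDr).
rewrite !(mulmxZr, mulmxZl, dg_mul, dg_bd, bd_dg, bd_mul, mulmx1, mul1mx, mulmx0, mul0mx, scaler0, addr0, add0r, bd0) //.
rewrite ?eqxx ?eqnSF ?eqSnF /= ?(mulmxZr, mulmxZl, dg_mul, dg_bd, bd_dg, bd_mul, mulmx1, mul1mx, mulmx0, mul0mx, scaler0, addr0, add0r, bd0) //.
rewrite ?eqSnF ?eqnSF /= ?scaler0 ?addr0 ?add0r /dg /bd ?pblkZ ?pblkD; apply: pblk_ext => x y hx hy.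
rewrite /Nd; casek x k; casek y k; msimp.
all: try done.
by rewrite scalerDr (addrC ('X *: ('X *: T))).
Qed.

Lemma Mjinv_Mj : Mjinv *m Mj = 1%:M.
Proof.
have hk' := hk0.
rewrite /Mjinv /Mj -dg1 !(mulmxDl, mulmxDr).
rewrite !(mulmxZr, mulmxZl, dg_mul, dg_bd, bd_dg, bd_mul, mulmx1, mul1mx, mulmx0, mul0mx, scaler0, addr0, add0r, bd0) //.
rewrite ?eqxx ?eqnSF ?eqSnF /= ?(mulmxZr, mulmxZl, dg_mul, dg_bd, bd_dg, bd_mul, mulmx1, mul1mx, mulmx0, mul0mx, scaler0, addr0, add0r, bd0) //.
rewrite ?eqSnF ?eqnSF /= ?scaler0 ?addr0 ?add0r /dg /bd ?pblkZ ?pblkD -?pblk1; apply: pblk_ext => x y hx hy.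
casek x k; casek y k; msimp.
all: try done.
by rewrite subrr.
Qed.

Lemma Mj_Mjinv : Mj *m Mjinv = 1%:M.
Proof.
have hk' := hk0.
rewrite /Mjinv /Mj -dg1 !(mulmxDl, mulmxDr).
rewrite !(mulmxZr, mulmxZl, dg_mul, dg_bd, bd_dg, bd_mul, mulmx1, mul1mx, mulmx0, mul0mx, scaler0, addr0, add0r, bd0) //.
rewrite ?eqxx ?eqnSF ?eqSnF /= ?(mulmxZr, mulmxZl, dg_mul, dg_bd, bd_dg, bd_mul, mulmx1, mul1mx, mulmx0, mul0mx, scaler0, addr0, add0r, bd0) //.
rewrite ?eqSnF ?eqnSF /= ?scaler0 ?addr0 ?add0r /dg /bd ?pblkZ ?pblkD -?pblk1; apply: pblk_ext => x y hx hy.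
casek x k; casek y k; msimp.
all: try done.
by rewrite addNr.
Qed.

End Core.


Section Fied.
Variables (F : fieldType) (m n r : nat) (hm : (1 < m)%N) (A : nat -> 'M[F]_n)
  (C : 'M[F]_(n, r)) (B : 'M[F]_(r, n)) (Ap Ep : 'M[F]_r).
Local Notation R := {poly F}.
Local Notation MN := 'M[R]_n.
Local Notation K := (m * n + r)%N.
Local Notation dg := (@dg F m n).
Local Notation bd := (@bd F m n).
Local Notation pblk := (@pblk F m n).

Definition Fm i : 'M[R]_K := map_mx polyC (fiedler_mx m A C B Ap Ep i).
Definition A' i : MN := map_mx polyC (A i).
Definition C' : 'M[R]_(m * n, r) := map_mx polyC (emC m C).
Definition B' : 'M[R]_(r, m * n) := map_mx polyC (emB m B).

Lemma map_blockmx (f : nat -> nat -> 'M[F]_n) :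
  map_mx polyC (blockmx m f) = pblk (fun b c => map_mx polyC (f b c)).
Proof. by apply/matrixP=> i j; rewrite !mxE. Qed.

Definition Mip i := pblk (fun b c => map_mx polyC (Miblk m i (A i) b c)).

Lemma Fm_mid i : (0 < i < m)%N -> Fm i = block_mx (Mip i) 0 0 1%:M.
Proof.
case/andP=> h0 him; rewrite /Fm /fiedler_mx.
have -> : (i == 0%N) = false by case: i h0 him.
have -> : (i == m) = false by apply/negbTE; rewrite neq_ltn him.
by rewrite map_block_mx map_blockmx !map_mx0 map_mx1.
Qed.

Lemma Fm_0 : Fm 0 = block_mx (pblk (fun b c => map_mx polyC (M0blk m (A 0%N) b c))) (- C') (- B')
   (- map_mx polyC Ap).
Proof. by rewrite /Fm /fiedler_mx eqxx map_block_mx map_blockmx !map_mxN. Qed.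

Lemma Fm_m : Fm m = block_mx (dg (Nd 0 (A' m))) 0 0 (- map_mx polyC Ep).
Proof.
rewrite /Fm /fiedler_mx.
have -> : (m == 0%N) = false by case: m hm.
rewrite eqxx map_block_mx map_blockmx !map_mx0 map_mxN; congr block_mx.
apply: pblk_ext => b c _ _; rewrite /Mmblk /Nd ltn0 /=.
by case: (b == c); case: (b == 0%N); rewrite ?map_mx0 ?map_mx1.
Qed.

Lemma Mip_eq k : (k.+1 < m)%N -> Mip (m - k.+1) = Mj m k (A' (m - k.+1)).
Proof.
move=> hk; have hk' : (k < m)%N by apply: ltnW.
have e : (m - (m - k.+1) - 1)%N = k by lia.
rewrite /Mip /Mj /dg /bd !pblkD; apply: pblk_ext => x y hx hy.
rewrite /Miblk e -/(A' _).
casek x k; casek y k; msimp; rewrite ?map_mx0 ?map_mx1 ?map_mxN //.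
all: try by case: (x == y); rewrite ?map_mx0 ?map_mx1.
Qed.


Definition Ssup i b := if i == 0%N then b == m.-1 else (b == (m - i - 1)%N) || (b == (m - i - 1).+1).
Definition Xf i b c : MN := map_mx polyC (if i == 0%N then M0blk m (A 0%N) b c else Miblk m i (A i) b c)
  - (if b == c then 1%:M else 0).

Lemma Xf_supp i b c : ~~ (Ssup i b && Ssup i c) -> Xf i b c = 0.
Proof.
rewrite /Ssup /Xf; case: i => [|i] /=; last first.
  rewrite /Miblk /=; move: (m - i.+1 - 1)%N => k h.
  casek b k; casek c k; move: h; msimp => // _; try case: ifP; by rewrite ?map_mx0 ?map_mx1 subrr.
rewrite /M0blk; have [?|hb] := eqVneq b m.-1; have [?|hc] := eqVneq c m.-1; subst => //=.
  by move=> _; rewrite (eq_sym m.-1 c) (negbTE hc) map_mx0 subrr.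
all: by move=> _; case: ifP; rewrite ?map_mx0 ?map_mx1 subrr.
Qed.


Lemma Fm_mid' i : (0 < i < m)%N -> Fm i = 1%:M + block_mx (pblk (Xf i)) 0 0 0.
Proof.
move=> hi; rewrite Fm_mid // (scalar_mx_block (m * n) r) add_block_mx !addr0.
congr block_mx; rewrite -pblk1 pblkD; apply: pblk_ext => b c _ _.
rewrite /Xf; have -> : (i == 0%N) = false by case/andP: hi; case: i.
by rewrite addrC subrK.
Qed.

Lemma Fm_0' : Fm 0 = 1%:M + block_mx (pblk (Xf 0)) (- C') (- B') (- map_mx polyC Ap - 1%:M).
Proof.
rewrite Fm_0 (scalar_mx_block (m * n) r) add_block_mx !add0r.
congr block_mx; last by rewrite addrC subrK.
rewrite -pblk1 pblkD; apply: pblk_ext => b c _ _.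
by rewrite /Xf /= addrC subrK.
Qed.

Lemma pblkC0 f : (forall b, f b m.-1 = 0) -> pblk f *m C' = 0.
Proof.
move=> hf; apply/matrixP=> p q; rewrite !mxE; apply: big1 => x _.
rewrite !mxE; case: eqP => [h|_]; last by rewrite mulr0.
by rewrite h hf mxE mul0r.
Qed.

Lemma pblkB0 f : (forall c, f m.-1 c = 0) -> B' *m pblk f = 0.
Proof.
move=> hf; apply/matrixP=> p q; rewrite !mxE; apply: big1 => x _.
rewrite !mxE; case: eqP => [h|_]; last by rewrite mul0r.
by rewrite h hf mxE mulr0.
Qed.

Lemma comm1 p (X Y : 'M[R]_p) : X *m Y = 0 -> Y *m X = 0 ->
  (1%:M + X) *m (1%:M + Y) = (1%:M + Y) *m (1%:M + X).
Proof.
move=> h1 h2; rewrite !(mulmxDl, mulmxDr) !(mul1mx, mulmx1) h1 h2 !addr0.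
by rewrite addrAC.
Qed.


Lemma Ssup_disj i j d : (i.+2 <= j)%N -> (j < m)%N -> Ssup i d -> Ssup j d -> False.
Proof.
rewrite /Ssup; case: j => [|j] // hij hjm /=; case: i hij => [|i] hij /=;
  [move=> /eqP -> | case/orP => /eqP ->]; case/orP => /eqP; lia.
Qed.

Lemma Xf_notlast j b : (2 <= j)%N -> (j < m)%N -> Xf j b m.-1 = 0 /\ Xf j m.-1 b = 0.
Proof.
move=> h2 hjm; have hn : ~~ Ssup j m.-1.
  by rewrite /Ssup; case: j h2 hjm => [|j] // h2 hjm /=; apply/negP; case/orP=> /eqP; lia.
by split; apply: Xf_supp; rewrite ?(negbTE hn) ?andbF.
Qed.

Lemma Fm_comm i j : (i.+2 <= j)%N -> (j < m)%N -> Fm i *m Fm j = Fm j *m Fm i.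
Proof.
move=> hij hjm.
have hj : (0 < j < m)%N by rewrite hjm andbT (leq_trans _ hij).
have d1 : pblk (Xf i) *m pblk (Xf j) = 0.
  apply: (@pblk_disj _ m _ _ _ (Ssup i) (Ssup j)); try by move=> *; apply: Xf_supp.
  by move=> d h1; apply/negP => h2; apply: (Ssup_disj hij hjm h1 h2).
have d2 : pblk (Xf j) *m pblk (Xf i) = 0.
  apply: (@pblk_disj _ m _ _ _ (Ssup j) (Ssup i)); try by move=> *; apply: Xf_supp.
  by move=> d h1; apply/negP => h2; apply: (Ssup_disj hij hjm h2 h1).
rewrite (Fm_mid' hj); have [?|hi0] := posnP i.
  subst i; have h2 : (2 <= j)%N by [].
  rewrite Fm_0'; apply: comm1; rewrite mulmx_block !(mulmx0, mul0mx, addr0, add0r).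
    rewrite d1 mulNmx pblkB0 ?oppr0 ?block_mx0 //.
    by move=> c; case: (Xf_notlast c h2 hjm).
  rewrite d2 mulmxN pblkC0 ?oppr0 ?block_mx0 //.
  by move=> b; case: (Xf_notlast b h2 hjm).
have hi : (0 < i < m)%N by rewrite hi0 /= (leq_ltn_trans _ hjm) // (leq_trans _ hij) // leqW.
rewrite (Fm_mid' hi); apply: comm1; rewrite mulmx_block !(mulmx0, mul0mx, addr0, add0r).
  by rewrite d1 block_mx0.
by rewrite d2 block_mx0.
Qed.

End Fied.


Section Word.
Variables (F : fieldType) (m n r : nat) (hm : (1 < m)%N) (A : nat -> 'M[F]_n)
  (C : 'M[F]_(n, r)) (B : 'M[F]_(r, n)) (Ap Ep : 'M[F]_r) (s : 'S_m).
Local Notation R := {poly F}.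
Local Notation K := (m * n + r)%N.
Local Notation Fm := (Fm m A C B Ap Ep).

Definition pr (v : seq nat) : 'M[R]_K := foldr (fun i acc => Fm i *m acc) 1%:M v.

Lemma pr_cat u v : pr (u ++ v) = pr u *m pr v.
Proof. by elim: u => [|a u IH] /=; rewrite ?mul1mx // IH mulmxA. Qed.

Lemma pr_comm v X : (forall i, i \in v -> Fm i *m X = X *m Fm i) -> pr v *m X = X *m pr v.
Proof.
elim: v => [|a v IH] h /=; first by rewrite mul1mx mulmx1.
by rewrite -mulmxA IH ?mulmxA ?h ?mem_head // => i hi; apply: h; rewrite inE hi orbT.
Qed.

Definition w := map (fun k : 'I_m => nat_of_ord ((s^-1)%g k)) (index_enum 'I_m).

Lemma w_uniq : uniq w.
Proof.
rewrite map_inj_uniq ?index_enum_uniq // => a b /val_inj; exact: perm_inj.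
Qed.

Lemma w_mem i : (i < m)%N -> i \in w.
Proof.
move=> hi; apply/mapP; exists (s (Ordinal hi)); first by rewrite mem_index_enum.
by rewrite permK.
Qed.

Lemma w_lt i : i \in w -> (i < m)%N.
Proof. by case/mapP => k _ ->. Qed.

Definition Prd j := pr (filter (fun i => (i <= j)%N) w).

Lemma big_pr (P : pred nat) v :
  \big[mulmx/1%:M]_(i <- v | P i) Fm i = pr (filter P v).
Proof. by elim: v => [|a v IH]; rewrite ?big_nil ?big_cons //= IH; case: (P a). Qed.

Lemma prod_full :
  map_mx polyC (\big[mulmx/1%:M]_(k < m) fiedler_mx m A C B Ap Ep ((s^-1)%g k)) = Prd m.-1.
Proof.
rewrite (big_morph (map_mx (@polyC F)) (@map_mxM _ _ (@polyC F) K K K) (map_mx1 (@polyC F) K)).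
rewrite /Prd -big_pr /w big_map; apply: eq_bigl => k.
by rewrite -ltnS prednK ?ltn_ord // ltnW.
Qed.

Lemma Prd_step j : (0 < j < m)%N -> Prd j = Fm j *m Prd j.-1 \/ Prd j = Prd j.-1 *m Fm j.
Proof.
case/andP=> hj0 hjm.
have hfil : filter (fun i => (i <= j.-1)%N) w = filter (fun i => (i <= j.-1)%N) (filter (fun i => (i <= j)%N) w).
  rewrite -filter_predI; apply: eq_filter => i /=; apply/idP/andP => [h|[]//]; split => //.
  exact: leq_trans h (leq_pred j).
rewrite /Prd hfil; move: (w_uniq) (@w_mem j hjm) (@w_mem j.-1 (leq_ltn_trans (leq_pred j) hjm)).
set u := filter _ w.
have hu : uniq u by rewrite filter_uniq // w_uniq.
have hj : j \in u by rewrite mem_filter leqnn w_mem.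
have hj1 : j.-1 \in u by rewrite mem_filter leq_pred w_mem // (leq_ltn_trans (leq_pred j)).
have hall : forall i, i \in u -> (i <= j)%N by move=> i; rewrite mem_filter => /andP[].
move=> _ _ _; move: hu hj1 hall; clearbody u; case/splitPr: hj => u1 u2.
rewrite cat_uniq /= negb_or => /and3P[hu1 /andP[hju1 hdisj] /andP[hju2 hu2]].
have hne : j.-1 != j by rewrite neq_ltn prednK ?leqnn // orbT.
rewrite mem_cat inE (negbTE hne) /= => hj1 hall.
have hall1 : forall i, i \in u1 -> (i <= j)%N /\ i != j.
  move=> i hi; split; first by apply: hall; rewrite mem_cat hi.
  by apply: contraNneq hju1 => <-.
have hall2 : forall i, i \in u2 -> (i <= j)%N /\ i != j.
  move=> i hi; split; first by apply: hall; rewrite mem_cat inE hi !orbT.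
  by apply: contraNneq hju2 => <-.
have fil1 : forall v, (forall i, i \in v -> (i <= j)%N /\ i != j) -> filter (fun i => (i <= j.-1)%N) v = v.
  move=> v hv; apply/all_filterP/allP => i /hv [h1 h2] /=; rewrite -ltnS prednK //.
  by rewrite ltn_neqAle h2.
rewrite filter_cat /= ifF; last by apply/negbTE; rewrite -ltnNge prednK ?leqnn.
rewrite !fil1 // !pr_cat /=.
case/orP: hj1 => hj1.
  (* j.-1 in u1 : elements of u2 commute *)
  right; rewrite -[Fm j *m pr u2]pr_comm ?mulmxA //.
  move=> i hi; have [h1 h2] := hall2 _ hi.
  have hi1 : i != j.-1.
    by apply: contraNneq hdisj => hij1; apply/hasP; exists i => //=; rewrite hij1.
  apply: (Fm_comm hm) => //; lia.
left; rewrite mulmxA [pr u1 *m Fm j]pr_comm ?mulmxA //.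
move=> i hi; have [h1 h2] := hall1 _ hi.
have hi1 : i != j.-1.
  by apply: contraNneq hdisj => hij1; apply/hasP; exists j.-1 => //=; rewrite -hij1.
apply: (Fm_comm hm) => //; lia.
Qed.

End Word.


Lemma sandwich (R : pzRingType) p (x y Q E : 'M[R]_p) : x *m E = x -> E *m y = y -> E *m Q = E -> Q *m E = E ->
  (1%:M + x) *m Q *m (1%:M + y) = Q + x + y + x *m y.
Proof.
move=> hx hy hEQ hQE.
have xQ : x *m Q = x by rewrite -hx -mulmxA hEQ.
have Qy : Q *m y = y by rewrite -hy mulmxA hQE.
rewrite !(mulmxDl, mulmxDr) !(mul1mx, mulmx1) xQ ?Qy.
by rewrite !addrA.
Qed.

Definition invx (R : pzRingType) p (X : 'M[R]_p) := exists Y, X *m Y = 1%:M.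

Lemma invx_mul (R : pzRingType) p (X Y : 'M[R]_p) : invx X -> invx Y -> invx (X *m Y).
Proof. by case=> X' hX [Y' hY]; exists (Y' *m X'); rewrite mulmxA -(mulmxA X) hY mulmx1. Qed.

Lemma invx_nil (R : pzRingType) p (x : 'M[R]_p) : x *m x = 0 -> invx (1%:M + x).
Proof.
move=> h; exists (1%:M - x); rewrite mulmxDl mul1mx mulmxBr mulmx1 h subr0.
by rewrite subrK.
Qed.

Section Main.
Variables (F : fieldType) (m n r : nat) (hm : (1 < m)%N) (A : nat -> 'M[F]_n)
  (C : 'M[F]_(n, r)) (B : 'M[F]_(r, n)) (Ap Ep : 'M[F]_r) (s : 'S_m).
Local Notation R := {poly F}.
Local Notation MN := 'M[R]_n.
Local Notation K := (m * n + r)%N.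
Local Notation Fm := (Fm m A C B Ap Ep).
Local Notation Prd := (Prd A C B Ap Ep s).
Local Notation dg := (@dg F m n).
Local Notation bd := (@bd F m n).
Local Notation pblk := (@pblk F m n).

Definition Ak i : MN := map_mx polyC (A i).
Fixpoint Tk (k : nat) : MN := if k is k'.+1 then 'X *: Tk k' + Ak (m - k) else Ak m.
Definition E' : 'M[R]_r := map_mx polyC Ep.
Definition NN k : 'M[R]_K := block_mx (dg (Nd k (Tk k))) 0 0 (- E').
Definition Sk k := 'X *: NN k - Prd (m.-1 - k).
Definition Ek k : 'M[R]_K := block_mx (bd 1%:M k k) 0 0 0.
Definition hat (x : 'M[R]_(m * n)) : 'M[R]_K := block_mx x 0 0 0.

Lemma hat_mul x y : hat x *m hat y = hat (x *m y).
Proof. by rewrite /hat mulmx_block !(mulmx0, mul0mx, addr0). Qed.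

Lemma one_hat x : 1%:M + hat x = block_mx (1%:M + x) 0 0 1%:M.
Proof. by rewrite /hat (scalar_mx_block (m * n) r) add_block_mx !addr0. Qed.

Lemma bd_supp (k : nat) : forall b c : nat, ~~ (pred1 k b && pred1 k c) ->
  (if (b == k) && (c == k) then (1%:M : MN) else 0) = 0.
Proof. by move=> b c; rewrite /= => /negbTE ->. Qed.

Lemma fix_Fm k i : (k.+1 < m)%N -> (i <= m.-1 - k.+1)%N ->
  Fm i *m Ek k = Ek k /\ Ek k *m Fm i = Ek k.
Proof.
move=> hk hi.
have hdisj : forall d, Ssup m i d -> ~~ pred1 k d.
  move=> d; rewrite /Ssup /=; case: (i) hi => [|i'] hi /=.
    by move=> /eqP ->; apply/eqP; lia.
  by case/orP=> /eqP ->; apply/eqP; lia.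
have hdisj' : forall d, pred1 k d -> ~~ Ssup m i d.
  by move=> d hd; apply/negP => /hdisj; rewrite hd.
have X1 : pblk (Xf m A i) *m bd 1%:M k k = 0.
  apply: (@pblk_disj _ m _ _ _ (Ssup m i) (pred1 k)) => //; first by move=> *; apply: Xf_supp.
  exact: bd_supp.
have X2 : bd 1%:M k k *m pblk (Xf m A i) = 0.
  apply: (@pblk_disj _ m _ _ _ (pred1 k) (Ssup m i)) => //; last by move=> *; apply: Xf_supp.
  exact: bd_supp.
case: i hi X1 X2 {hdisj hdisj'} => [|i] hi X1 X2.
  rewrite Fm_0' mulmxDl mulmxDr mul1mx mulmx1 /Ek !mulmx_block.
  rewrite !(mulmx0, mul0mx, addr0, add0r) X1 X2 mulNmx mulmxN pblkB0 ?pblkC0 ?oppr0 ?block_mx0 ?addr0 //.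
  by move=> b; rewrite (_ : (m.-1 == k) = false) ?andbF //; apply/negbTE/eqP; lia.
  by move=> c; rewrite (_ : (m.-1 == k) = false) //; apply/negbTE/eqP; lia.
have hi' : (0 < i.+1 < m)%N by lia.
rewrite (Fm_mid' _ _ _ _ _ hi') mulmxDl mulmxDr mul1mx mulmx1 /Ek !mulmx_block.
by rewrite !(mulmx0, mul0mx, addr0, add0r) X1 X2 block_mx0 !addr0.
Qed.


Lemma fix_pr k v : (k.+1 < m)%N -> (forall i, i \in v -> (i <= m.-1 - k.+1)%N) ->
  pr m A C B Ap Ep v *m Ek k = Ek k /\ Ek k *m pr m A C B Ap Ep v = Ek k.
Proof.
move=> hk; elim: v => [|a v IH] hv /=; first by rewrite mul1mx mulmx1.
have [h1 h2] := fix_Fm hk (hv a (mem_head _ _)).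
have [h3 h4] : pr m A C B Ap Ep v *m Ek k = Ek k /\ Ek k *m pr m A C B Ap Ep v = Ek k.
  by apply: IH => i hi; apply: hv; rewrite inE hi orbT.
by rewrite -mulmxA h3 h1 mulmxA h2 h4.
Qed.

Lemma cancel1 (V : zmodType) (x y c : V) : (x + c) - (y + c) = x - y.
Proof. by rewrite opprD addrACA subrr addr0. Qed.

Lemma step k : (k.+1 < m)%N -> exists Xl Xr : 'M[R]_(m * n), invx Xl /\ invx Xr /\
  block_mx Xl 0 0 1%:M *m Sk k *m block_mx Xr 0 0 1%:M = Sk k.+1.
Proof.
move=> hk.
have hj : (0 < m.-1 - k < m)%N by lia.
have hj1 : (m.-1 - k).-1 = (m.-1 - k.+1)%N by lia.
have hjm : (m.-1 - k)%N = (m - k.+1)%N by lia.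
set Aj := Ak (m - k.+1).
have hFmj : Fm (m.-1 - k) = block_mx (Mj m k Aj) 0 0 1%:M.
  by rewrite Fm_mid // hjm (Mip_eq hm).
set Q := Prd (m.-1 - k).-1.
have [hQ1 hQ2] : Q *m Ek k = Ek k /\ Ek k *m Q = Ek k.
  apply: fix_pr => // i; rewrite mem_filter hj1 => /andP[] //.
have hS1 : Sk k.+1 = 'X *: NN k.+1 - Q by rewrite /Sk /Q hj1.
have hT : Tk k.+1 = 'X *: Tk k + Aj by [].
have hk' : (k < m)%N by apply: ltnW.
rewrite hS1 /Sk; have [hP|hP] := Prd_step hm A C B Ap Ep s hj; rewrite hP hFmj -/Q.
  set a := bd ('X *: Tk k) k.+1 k; set b := bd ('X *: 1%:M) k k.+1.
  exists ((1%:M + a) *m Mjinv m k Aj), (1%:M + b); split; [|split].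
  - apply: invx_mul; last by exists (Mj m k Aj); apply: Mjinv_Mj.
    by apply: invx_nil; rewrite /a bd_mul // eqnSF.
  - by apply: invx_nil; rewrite /b bd_mul // eqSnF.
  rewrite mulmxBr mulmxBl.
  have PA : block_mx ((1%:M + a) *m Mjinv m k Aj) 0 0 1%:M *m ('X *: NN k) *m block_mx (1%:M + b) 0 0 1%:M
     = 'X *: NN k.+1 + hat a + hat b + hat (a *m b).
    rewrite /NN /hat !scale_block_mx !mulmx_block !(mulmx0, mul0mx, addr0, add0r, mul1mx, mulmx1, scaler0).
    by rewrite core1 // !add_block_mx !addr0 hT.
  have PB : block_mx ((1%:M + a) *m Mjinv m k Aj) 0 0 1%:M *m (block_mx (Mj m k Aj) 0 0 1%:M *m Q) *m block_mx (1%:M + b) 0 0 1%:M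
     = Q + hat a + hat b + hat a *m hat b.
    rewrite mulmxA mulmx_block !(mulmx0, mul0mx, addr0, add0r, mul1mx, mulmx1).
    rewrite -[(1%:M + a) *m Mjinv m k Aj *m Mj m k Aj]mulmxA Mjinv_Mj // mulmx1 -!one_hat; apply: (sandwich (E := Ek k)) => //.
      by rewrite /hat /Ek mulmx_block !(mulmx0, mul0mx, addr0) /a bd_mul // eqxx mulmx1.
    by rewrite /hat /Ek mulmx_block !(mulmx0, mul0mx, addr0) /b bd_mul // eqxx mul1mx.
  by rewrite PA PB hat_mul !cancel1.
set a := bd ('X *: 1%:M) k.+1 k; set b := bd ('X *: Tk k) k k.+1.
exists (1%:M + a), (Mjinv m k Aj *m (1%:M + b)); split; [|split].
- by apply: invx_nil; rewrite /a bd_mul // eqnSF.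
- apply: invx_mul; first by exists (Mj m k Aj); apply: Mjinv_Mj.
  by apply: invx_nil; rewrite /b bd_mul // eqSnF.
rewrite mulmxBr mulmxBl.
have PA : block_mx (1%:M + a) 0 0 1%:M *m ('X *: NN k) *m block_mx (Mjinv m k Aj *m (1%:M + b)) 0 0 1%:M
   = 'X *: NN k.+1 + hat a + hat b + hat (a *m b).
  rewrite /NN /hat !scale_block_mx !mulmx_block !(mulmx0, mul0mx, addr0, add0r, mul1mx, mulmx1, scaler0).
  by rewrite mulmxA core2 // !add_block_mx !addr0 hT.
have PB : block_mx (1%:M + a) 0 0 1%:M *m (Q *m block_mx (Mj m k Aj) 0 0 1%:M) *m block_mx (Mjinv m k Aj *m (1%:M + b)) 0 0 1%:M
   = Q + hat a + hat b + hat a *m hat b.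
  rewrite mulmxA -(mulmxA _ (block_mx (Mj m k Aj) 0 0 1%:M)) mulmx_block !(mulmx0, mul0mx, addr0, add0r, mul1mx, mulmx1).
  rewrite mulmxA Mj_Mjinv // mul1mx -!one_hat; apply: (sandwich (E := Ek k)) => //.
    by rewrite /hat /Ek mulmx_block !(mulmx0, mul0mx, addr0) /a bd_mul // eqxx mulmx1.
  by rewrite /hat /Ek mulmx_block !(mulmx0, mul0mx, addr0) /b bd_mul // eqxx mul1mx.
by rewrite PA PB hat_mul !cancel1.
Qed.

End Main.


Lemma invx_unimod (F : fieldType) p (U : 'M[{poly F}]_p) : invx U -> unimodular U.
Proof.
case=> U' h.
have hu : \det U \is a GRing.unit.
  have h1 : \det U * \det U' = 1 by rewrite -det_mulmx h det1.
  by apply/unitrP; exists (\det U'); rewrite mulrC h1.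
rewrite /unimodular; move: hu; rewrite poly_unitE => /andP[/size_poly1P [c hc ->] _].
by exists c.
Qed.

Section Fin.
Variables (F : fieldType) (m n r : nat) (hm : (1 < m)%N) (A : nat -> 'M[F]_n)
  (C : 'M[F]_(n, r)) (B : 'M[F]_(r, n)) (Ap Ep : 'M[F]_r) (s : 'S_m).
Local Notation R := {poly F}.
Local Notation MN := 'M[R]_n.
Local Notation K := (m * n + r)%N.
Local Notation Fm := (Fm m A C B Ap Ep).
Local Notation Prd := (Prd A C B Ap Ep s).
Local Notation Sk := (Sk A C B Ap Ep s).
Local Notation dg := (@dg F m n).
Local Notation bd := (@bd F m n).
Local Notation pblk := (@pblk F m n).

Lemma induct k : (k < m)%N -> exists U V : 'M[R]_(m * n), invx U /\ invx V /\
  block_mx U 0 0 1%:M *m Sk 0 *m block_mx V 0 0 1%:M = Sk k.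
Proof.
elim: k => [|k IH] hk.
  exists 1%:M, 1%:M; split; [by exists 1%:M; rewrite mulmx1|split; first by exists 1%:M; rewrite mulmx1].
  by rewrite -scalar_mx_block mul1mx mulmx1.
have [U [V [hU [hV e]]]] := IH (ltnW hk).
have [Xl [Xr [hl [hr e2]]]] := step hm A C B Ap Ep s hk.
exists (Xl *m U), (V *m Xr); split; [exact: invx_mul|split; first exact: invx_mul].
rewrite -e2 -e.
have -> : block_mx (Xl *m U) 0 0 1%:M = block_mx Xl 0 0 1%:M *m block_mx U 0 0 (1%:M : 'M[R]_r).
  by rewrite mulmx_block !(mulmx0, mul0mx, addr0, add0r, mulmx1).
have -> : block_mx (V *m Xr) 0 0 1%:M = block_mx V 0 0 1%:M *m block_mx Xr 0 0 (1%:M : 'M[R]_r).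
  by rewrite mulmx_block !(mulmx0, mul0mx, addr0, add0r, mulmx1).
by rewrite !mulmxA.
Qed.

Lemma Sk0 : Sk 0 = fiedler_pencil A C B Ap Ep s.
Proof.
rewrite /Sk /fiedler_pencil subn0 -(prod_full hm) -/(Fm m) (Fm_m hm).
by [].
Qed.

Lemma Prd0 : Prd 0 = Fm 0.
Proof.
rewrite /Prd (eq_filter (a2 := pred1 0%N)); last by move=> i; rewrite leqn0.
rewrite filter_pred1_uniq; first by rewrite /pr /= mulmx1.
  exact: w_uniq.
by apply: w_mem; apply: ltnW.
Qed.

End Fin.


Lemma blk_eq m n (p q : 'I_(m * n)) : (p == q) = ((p %/ n)%N == (q %/ n)%N) && (off p == off q).
Proof.
apply/eqP/andP => [->|[/eqP h1 /eqP h2]]; first by [].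
apply: val_inj; rewrite /= (divn_eq p n) (divn_eq q n) h1.
by move: h2 => /(congr1 val) /= ->.
Qed.

Lemma lo_div m n (p : 'I_(m * n)) : (p < m.-1 * n)%N -> (p %/ n < m.-1)%N.
Proof.
case: n p => [|n] p; first by case: p => i; rewrite muln0.
by move=> h; rewrite ltn_divLR.
Qed.

Lemma hi_div m n (p : 'I_(m * n)) (o : 'I_n) : (p : nat) = (m.-1 * n + o)%N ->
  (p %/ n)%N = m.-1 /\ off p = o.
Proof.
case: o => o ho /= h; split; last by apply: val_inj; rewrite /= h modnMDl modn_small.
by rewrite h divnMDl ?divn_small ?addn0 // (leq_ltn_trans _ ho).
Qed.

Lemma castmx_block (R : Type) (a b r : nat) (e0 : a = b) (e1 : (a + r = b + r)%N)
  (X11 : 'M[R]_a) (X12 : 'M[R]_(a, r)) (X21 : 'M[R]_(r, a)) (X22 : 'M[R]_r) :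
  castmx (e1, e1) (block_mx X11 X12 X21 X22) =
  block_mx (castmx (e0, e0) X11) (castmx (e0, erefl r) X12) (castmx (erefl r, e0) X21) X22.
Proof. by case: b / e0 e1 => e1; rewrite !castmx_id. Qed.

Section Fin2.
Variables (F : fieldType) (m n r : nat) (hm : (1 < m)%N) (A : nat -> 'M[F]_n)
  (C : 'M[F]_(n, r)) (B : 'M[F]_(r, n)) (Ap Ep : 'M[F]_r) (s : 'S_m).
Local Notation R := {poly F}.
Local Notation MN := 'M[R]_n.
Local Notation K := (m * n + r)%N.
Local Notation Sk := (Sk A C B Ap Ep s).
Local Notation dg := (@dg F m n).
Local Notation pblk := (@pblk F m n).

Definition P' : MN := \sum_(j < m.+1) 'X^j *: map_mx polyC (A j).
Definition Dm := dg (fun d => if d == m.-1 then 1%:M else - 1%:M).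
Definition Fin : 'M[R]_K := block_mx (dg (fun d => if d == m.-1 then P' else 1%:M)) (C' m C) (B' m B)
  (map_mx polyC Ap - 'X *: map_mx polyC Ep).

Lemma Tk_sum k : (k < m)%N -> Tk m A k = \sum_(i < k.+1) 'X^i *: Ak A (m - k + i).
Proof.
elim: k => [|k IH] hk.
  by rewrite big_ord1 /= expr0 scale1r subn0 addn0.
rewrite /= IH ?(ltnW hk) // [RHS]big_ord_recl /= expr0 scale1r addn0 addrC scaler_sumr.
congr (_ + _); apply: eq_bigr => i _; rewrite scalerA -exprS /bump /= add1n; congr (_ *: Ak A _); lia.
Qed.

Lemma P_eq : 'X *: Tk m A m.-1 + Ak A 0 = P'.
Proof.
have hm0 : (0 < m)%N by apply: ltnW.
rewrite (Tk_sum (k := m.-1)); last by rewrite prednK.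
rewrite (prednK hm0).
rewrite /P' [RHS]big_ord_recl /= expr0 scale1r addrC scaler_sumr; congr (_ + _).
apply: eq_bigr => i _; rewrite scalerA -exprS /bump /= add1n; congr (_ *: _); rewrite /Ak; congr map_mx; congr A.
lia.
Qed.


Lemma Dm_inv : invx Dm.
Proof.
exists Dm; rewrite /Dm dg_mul -dg1; apply: pblk_ext => b c _ _.
by case: (b == c) => //; case: (b == m.-1); rewrite ?mulmx1 ?mulmxN ?mulNmx ?opprK ?mulmx1.
Qed.

Lemma dg_C g : g m.-1 = 1%:M -> dg g *m C' m C = C' m C.
Proof.
move=> hg.
have -> : dg g = 1%:M + pblk (fun b c => if b == c then g b - 1%:M else 0).
  rewrite -pblk1 pblkD; apply: pblk_ext => b c _ _.
  by case: (b == c); rewrite ?addr0 // addrC subrK.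
rewrite mulmxDl mul1mx pblkC0 ?addr0 // => b.
by case: eqP => [->|]; rewrite ?hg ?subrr.
Qed.

Lemma dg_lin (x : R) g h : x *: dg g + - dg h = dg (fun d => x *: g d - h d).
Proof.
rewrite /dg pblkZ pblkN pblkD; apply: pblk_ext => b c _ _.
by case: (b == c); rewrite ?scaler0 ?oppr0 ?addr0.
Qed.

Lemma fin1 : block_mx Dm 0 0 1%:M *m Sk m.-1 = Fin.
Proof.
rewrite /Sk subnn (Prd0 hm) Fm_0 /NN scale_block_mx opp_block_mx add_block_mx mulmx_block.
rewrite !(mulmx0, mul0mx, addr0, add0r, mul1mx, scaler0, opprK) /Fin.
have hM0 : pblk (fun b c => map_mx polyC (M0blk m (A 0) b c)) = dg (fun d => if d == m.-1 then - Ak A 0 else 1%:M).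
  apply: pblk_ext => b c _ _; rewrite /M0blk.
  by case: (b == c); case: (b == m.-1); rewrite ?map_mx0 ?map_mx1 ?map_mxN.
congr block_mx; last by rewrite addrC scalerN.
  rewrite hM0 dg_lin /Dm dg_mul; apply: pblk_ext => b c hb _.
  case: (b == c); rewrite ?scaler0 ?oppr0 ?addr0 //.
  rewrite /Nd; case: (eqVneq b m.-1) => [->|hne].
    by rewrite ltnn ?eqxx mul1mx opprK; apply: P_eq.
  have -> : (b < m.-1)%N by lia.
  by rewrite scaler0 add0r mulNmx mul1mx opprK.
by apply: dg_C; rewrite eqxx.
Qed.

End Fin2.

Section Cast.
Variables (F : fieldType) (m n r : nat) (hm : (1 < m)%N) (A : nat -> 'M[F]_n)
  (C : 'M[F]_(n, r)) (B : 'M[F]_(r, n)) (Ap Ep : 'M[F]_r).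
Local Notation R := {poly F}.
Local Notation dg := (@dg F m n).

Lemma e0 : (m.-1 * n + n = m * n)%N.
Proof. by case: m hm => [|m0] // _; rewrite /= mulSn addnC. Qed.

Lemma cast11 : dg (fun d => if d == m.-1 then P' m A else 1%:M) =
  castmx (e0, e0) (block_mx (1%:M : 'M[R]_(m.-1 * n)) 0 0 (P' m A)).
Proof.
apply/matrixP => p q; rewrite castmxE !mxE.
case: splitP => [i1 hi1|i2 hi2]; rewrite mxE; case: splitP => [j1 hj1|j2 hj2]; rewrite ?mxE /=.
- move: hi1 hj1; rewrite /= => hi1 hj1.
  have hp : (p %/ n < m.-1)%N by apply: lo_div; rewrite hi1.
  have hq : (q %/ n < m.-1)%N by apply: lo_div; rewrite hj1.
  have -> : (i1 == j1) = (p == q) by rewrite -!val_eqE /= hi1 hj1.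
  by rewrite blk_eq (ltn_eqF hp); case: ((p %/ n)%N == (q %/ n)%N); rewrite !mxE.
- move: hi1 hj2; rewrite /= => hi1 hj2.
  have hp : (p %/ n < m.-1)%N by apply: lo_div; rewrite hi1.
  have [hq _] := hi_div hj2.
  by rewrite hq (ltn_eqF hp) mxE.
- move: hi2 hj1; rewrite /= => hi2 hj1.
  have hq : (q %/ n < m.-1)%N by apply: lo_div; rewrite hj1.
  have [hp _] := hi_div hi2.
  by rewrite hp eq_sym (ltn_eqF hq) mxE.
move: hi2 hj2; rewrite /= => hi2 hj2.
have [hp op] := hi_div hi2; have [hq oq] := hi_div hj2.
by rewrite hp hq eqxx op oq.
Qed.

Lemma cast12 : C' m C = castmx (e0, erefl r) (col_mx (0 : 'M[R]_(m.-1 * n, r)) (map_mx polyC C)).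
Proof.
apply/matrixP => p q; rewrite castmxE !mxE cast_ord_id.
case: splitP => [i1 hi1|i2 hi2]; rewrite ?mxE /=.
- move: hi1; rewrite /= => hi1.
  have hp : (p %/ n < m.-1)%N by apply: lo_div; rewrite hi1.
  by rewrite (ltn_eqF hp).
move: hi2; rewrite /= => hi2; have [hp op] := hi_div hi2.
by rewrite hp eqxx op.
Qed.

Lemma cast21 : B' m B = castmx (erefl r, e0) (row_mx (0 : 'M[R]_(r, m.-1 * n)) (map_mx polyC B)).
Proof.
apply/matrixP => p q; rewrite castmxE !mxE cast_ord_id.
case: splitP => [i1 hi1|i2 hi2]; rewrite ?mxE /=.
- move: hi1; rewrite /= => hi1.
  have hp : (q %/ n < m.-1)%N by apply: lo_div; rewrite hi1.
  by rewrite (ltn_eqF hp).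
move: hi2; rewrite /= => hi2; have [hp op] := hi_div hi2.
by rewrite hp eqxx op.
Qed.

Lemma fin2 : Fin m A C B Ap Ep = castmx (rl_cast n r (ltnW hm), rl_cast n r (ltnW hm))
   (block_mx (1%:M : 'M[R]_(m.-1 * n)) 0 0 (syspoly m A C B Ap Ep)).
Proof.
have hA := @block_mxA _ _ _ _ _ _ _ (1%:M : 'M[R]_(m.-1 * n)) 0 0 0 (P' m A) (map_mx polyC C) 0 (map_mx polyC B)
   (map_mx polyC Ap - 'X *: map_mx polyC Ep).
cbv zeta in hA; rewrite row_mx0 col_mx0 in hA.
rewrite /syspoly -/(P' m A) hA castmx_comp (castmx_block e0) /Fin -cast11 -cast12 -cast21.
by [].
Qed.

End Cast.

Unset Implicit Arguments.

Theorem theorem4p13 (F : fieldType) (n r m : nat) (hm : (1 < m)%N)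
  (A : nat -> 'M[F]_n) (hAm : A m != 0)
  (C : 'M[F]_(n, r)) (B : 'M[F]_(r, n)) (Ap Ep : 'M[F]_r) (s : 'S_m) :
  rosenbrock_lin (rl_cast n r (ltnW hm))
    (fiedler_pencil A C B Ap Ep s) (syspoly m A C B Ap Ep).
Proof.
have hm1 : (m.-1 < m)%N by rewrite prednK // ltnW.
have [U [V [hU [hV e]]]] := induct hm A C B Ap Ep s hm1.
exists ((@Dm F m n) *m U), V; split.
- apply: invx_unimod; apply: invx_mul => //; exact: Dm_inv.
- exact: invx_unimod.
rewrite -(fin2 hm) -(fin1 hm A C B Ap Ep s) -e (Sk0 hm).
have -> : block_mx ((@Dm F m n) *m U) 0 0 1%:M = block_mx ((@Dm F m n)) 0 0 1%:M *m block_mx U 0 0 (1%:M : 'M[{poly F}]_r).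
  by rewrite mulmx_block !(mulmx0, mul0mx, addr0, add0r, mulmx1).
by rewrite !mulmxA.
Qed.
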